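(* For all $n\ge1$, $$h_n=\frac52nH_n+\frac32P_n-2H_n,\qquad p_n=\frac52nP_n-\frac32P_n=\frac{5n-3}{2}P_n.$$
   Context: Let $s=\sqrt3/2$. Consider the standard triangular lattice in the plane whose vertices are the points $(a+b/2,\,bs)$ with $a,b\in\mathbb Z$ and whose edges are the unit segments joining lattice points in the directions $0^\circ,60^\circ,120^\circ$; it divides the plane into unit equilateral triangles called cells. A small tile is a single cell; a large tile is an equilateral triangle of side $2$ whose vertices are lattice points (so it is a union of $4$ cells; it may point up or down). For a region $R$ that is a finite union of cells, a tiling of $R$ is a finite set of small and large tiles, each contained in $R$, with pairwise disjoint interiors and union equal to $R$. For $n\ge1$, the region $H_n$ is the union of the trapezoid with vertices $(0,0),(n,0),(n-\tfrac12,s),(\tfrac12,s)$ and the trapezoid with vertices $(\tfrac12,s),(n-\tfrac12,s),(n,2s),(0,2s)$ ($4n-2$ cells; for $n=1$ two unit triangles meeting at a point), and $P_n$ is $H_n$ with the cell with vertices $(n-1,0),(n,0),(n-\tfrac12,s)$ removed. $H_n$ and $P_n$ also denote the numbers of tilings of these regions; thus $H_n=\frac{(1+\sqrt2)^n+(1-\sqrt2)^n}{2}$ and $P_n=\frac{(1+\sqrt2)^n-(1-\sqrt2)^n}{2\sqrt2}$. Define $h_n$ (resp. $p_n$) as the sum, over all tilings of $H_n$ (resp. $P_n$), of the total number of tiles in the tiling. *)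

(* Defs.v *)
From HB Require Import structures.
From mathcomp Require Import all_boot all_order all_algebra.
From mathcomp Require Import finmap.
Set Implicit Arguments. Unset Strict Implicit. Unset Printing Implicit Defensive.
Import Order.TTheory GRing.Theory Num.Theory.

Local Open Scope fset_scope.

(* Lattice point (a,b) : int * int  stands for the plane point (a + b/2, b*sqrt3/2).
   A cell is (a, b, up):
     up = true  : the up-pointing cell with vertices (a,b),(a+1,b),(a,b+1);
     up = false : the down-pointing cell with vertices (a+1,b),(a,b+1),(a+1,b+1).
   Every unit triangle of the lattice is exactly one such cell. *)
Definition cell := (int * int * bool)%type.

(* A tile is (k, (a,b)) with k : 'I_4 its kind:
     k = 0 : small tile = the up cell (a,b,true)
     k = 1 : small tile = the down cell (a,b,false)
     k = 2 : large up triangle, vertices (a,b),(a+2,b),(a,b+2)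
     k = 3 : large down triangle, vertices (a+1,b),(a-1,b+2),(a+1,b+2).
   Every side-2 lattice triangle (up or down) is exactly one tile of kind 2/3. *)
Definition tile := ('I_4 * (int * int))%type.

Definition tile_cells (t : tile) : seq cell :=
  let: (k, (a, b)) := t in
  match nat_of_ord k with
  | 0 => [:: (a, b, true)]
  | 1 => [:: (a, b, false)]
  | 2 => [:: (a, b, true); (a + 1, b, true); (a, b + 1, true); (a, b, false)]%R
  | _ => [:: (a, b, false); (a - 1, b + 1, false); (a, b + 1, false);
             (a, b + 1, true)]%R
  end.

Definition is_tiling (R : seq cell) (T : {fset tile}) : bool :=
  [&& all (fun t => all (fun c => c \in R) (tile_cells t)) T,
      all (fun t1 => all (fun t2 => (t1 == t2) ||
             ~~ has (fun c => c \in tile_cells t2) (tile_cells t1)) T) T &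
      all (fun c => has (fun t => c \in tile_cells t) T) R].

(* Finite pool of candidate tiles: every tile (k,(a,b)) contains a cell with
   coordinates (a,b), so every tile contained in R is in this pool. *)
Definition cand_tiles (R : seq cell) : {fset tile} :=
  [fset t in [seq (k, (c.1.1, c.1.2)) | k <- enum 'I_4, c <- R]
     | all (fun c => c \in R) (tile_cells t)].

Definition tilings (R : seq cell) : {fset {fset tile}} :=
  [fset T in fpowerset (cand_tiles R) | is_tiling R T].

Definition num_tilings (R : seq cell) : nat := #|` tilings R|.

Definition total_tiles (R : seq cell) : nat :=
  \sum_(T <- tilings R) #|` T|.

(* Region H_n: bottom row (strip 0 <= y <= s): up cells (a,0), 0<=a<n, and
   down cells (a,0), 0<=a<n-1 (trapezoid (0,0),(n,0),(n-1/2,s),(1/2,s));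
   top row (strip s <= y <= 2s): down cells (a-1,1), 0<=a<n, and up cells
   (a,1), 0<=a<n-1 (trapezoid (1/2,s),(n-1/2,s),(n,2s),(0,2s)). *)
Definition H_region (n : nat) : seq cell :=
  [seq ((a%:Z)%R, 0%R, true) | a <- iota 0 n] ++
  [seq ((a%:Z)%R, 0%R, false) | a <- iota 0 n.-1] ++
  [seq ((a%:Z - 1)%R, 1%R, false) | a <- iota 0 n] ++
  [seq ((a%:Z)%R, 1%R, true) | a <- iota 0 n.-1].

(* P_n: H_n minus the cell with vertices (n-1,0),(n,0),(n-1/2,s),
   i.e. the up cell (n-1, 0). *)
Definition P_region (n : nat) : seq cell :=
  [seq c <- H_region n | c != (((n.-1)%:Z)%R, 0%R, true)].

(* Main.v *)
Require Import Defs.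
From HB Require Import structures.
From mathcomp Require Import all_boot all_order all_algebra.
From mathcomp Require Import finmap zify ring lra.
Import Order.TTheory GRing.Theory Num.Theory.
Local Open Scope ring_scope.
Local Open Scope fset_scope.
Definition ok (x y : nat) : bool := (y == 0)%N || (x != y).
Definition valid (w : seq nat) : bool := path ok 0%N w.
Definition nl (w : seq nat) : nat := count (fun c => c != 0)%N w.

Fixpoint W (m : nat) : seq (seq nat) :=
  if m is m'.+1 then
    [seq rcons p.1 p.2 | p <- [seq (w, c) | w <- W m', c <- [:: 0; 1; 2]%N]
                       & ok (last 0%N p.1) p.2]
  else [:: [::]].

Lemma W_S m : W m.+1 = [seq rcons p.1 p.2 | p <- [seq (w, c) | w <- W m, c <- [:: 0; 1; 2]%N]
                       & ok (last 0%N p.1) p.2].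
Proof. by []. Qed.

Lemma memW m w : (w \in W m) = [&& size w == m, valid w & all (fun c => c <= 2)%N w].
Proof.
elim: m w => [|m IH] w.
  by case: w.
rewrite W_S; apply/idP/idP.
- case/mapP => [[w0 c]]; rewrite mem_filter => /andP [Hok /allpairsP [[w1 c1]] /= [Hw1 Hc1 [? ?]]] ->.
  subst w1 c1.
  move: Hw1; rewrite IH => /and3P [/eqP Hs Hv Ha].
  rewrite /valid in Hv; rewrite /= in Hok.
  rewrite size_rcons Hs eqxx /valid rcons_path Hv Hok all_rcons Ha /=.
  by move: Hc1; rewrite !inE => /or3P [] /eqP ->.
- case/lastP: w => [|w c]; first by [].
  rewrite size_rcons eqSS /valid rcons_path all_rcons => /and3P [Hs /andP [Hv Hok] /andP [Hc Ha]].
  apply/mapP; exists (w, c) => //; rewrite mem_filter Hok.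
  apply/allpairsP; exists (w, c) => /=; split => //.
    by rewrite IH Hs /valid Hv Ha.
  by rewrite !inE; case: c Hc {Hok} => [|[|[|]]].
Qed.

Lemma uniqW m : uniq (W m).
Proof.
elim: m => [|m IH] //.
rewrite W_S map_inj_in_uniq.
  by apply: filter_uniq; apply: allpairs_uniq => // [[a b] [c d]] _ _.
move=> [a b] [c d] _ _ /= /eqP; rewrite eqseq_rcons => /andP [/eqP -> /eqP ->] //.
Qed.

Definition Q m (phi : nat -> nat -> nat) := \sum_(w <- W m) phi (last 0%N w) (nl w).

Lemma Qrec m phi : Q m.+1 phi =
  \sum_(w <- W m) \sum_(c <- [:: 0; 1; 2]%N | ok (last 0%N w) c) phi c (nl w + (c != 0)%N)%N.
Proof.
rewrite /Q W_S big_map big_filter big_mkcond big_allpairs; apply: eq_bigr => w _.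
rewrite [RHS]big_mkcond; apply: eq_bigr => c _ /=.
by rewrite last_rcons /nl -cats1 count_cat /= addn0.
Qed.

Lemma lastW m w : w \in W m -> (last 0%N w <= 2)%N.
Proof.
rewrite memW => /and3P [_ _ Ha]; case/lastP: w Ha => [|w c] //.
by rewrite all_rcons last_rcons => /andP [].
Qed.

Lemma Q_ext m phi psi : (forall x k, (x <= 2)%N -> phi x k = psi x k) -> Q m phi = Q m psi.
Proof. move=> H; apply: eq_big_seq => w /lastW; exact: H. Qed.

Lemma QD m phi psi : Q m (fun x k => phi x k + psi x k)%N = (Q m phi + Q m psi)%N.
Proof. by rewrite /Q big_split. Qed.

Lemma Qrec' m phi : Q m.+1 phi =
  Q m (fun x k => \sum_(c <- [:: 0; 1; 2]%N | ok x c) phi c (k + (c != 0)%N)%N).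
Proof. exact: Qrec. Qed.

Lemma Q3 m phi p1 p2 p3 : (forall x k, (x <= 2)%N -> phi x k = p1 x k + p2 x k + p3 x k)%N ->
  Q m phi = (Q m p1 + Q m p2 + Q m p3)%N.
Proof. by move=> H; rewrite -!QD; apply: Q_ext. Qed.

Lemma Q4 m phi p1 p2 p3 p4 : (forall x k, (x <= 2)%N -> phi x k = p1 x k + p2 x k + p3 x k + p4 x k)%N ->
  Q m phi = (Q m p1 + Q m p2 + Q m p3 + Q m p4)%N.
Proof. by move=> H; rewrite -!QD; apply: Q_ext. Qed.

Lemma Q2 m phi p1 p2 : (forall x k, (x <= 2)%N -> phi x k = p1 x k + p2 x k)%N ->
  Q m phi = (Q m p1 + Q m p2)%N.
Proof. by move=> H; rewrite -!QD; apply: Q_ext. Qed.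

Definition aa m l := Q m (fun x _ => (x == l)%N : nat).
Definition ss m l := Q m (fun x k => (x == l)%N * k)%N.

Lemma inv m :
  [/\ aa m 1 = aa m 2, ss m 1 = ss m 2,
      (2 * (ss m 0 + ss m 1 + ss m 2) + (aa m 0 + aa m 2) = m.+1 * (aa m 0 + aa m 1 + aa m 2))%N
    & (2 * (ss m 0 + ss m 2) = m * (aa m 0 + aa m 2))%N].
Proof.
elim: m => [|m [IH1 IH2 IH3 IH4]].
  by rewrite /aa /ss /Q /= !big_cons !big_nil.
have ea0 : aa m.+1 0 = (aa m 0 + aa m 1 + aa m 2)%N.
  rewrite /aa Qrec'; (apply: Q3 || apply: Q2) => x k; rewrite /ok.
  by case: x => [|[|[|]]] //; rewrite !big_cons !big_nil.
have ea1 : aa m.+1 1 = (aa m 0 + aa m 2)%N.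
  rewrite /aa Qrec'; (apply: Q3 || apply: Q2) => x k; rewrite /ok.
  by case: x => [|[|[|]]] //; rewrite !big_cons !big_nil.
have ea2 : aa m.+1 2 = (aa m 0 + aa m 1)%N.
  rewrite /aa Qrec'; (apply: Q3 || apply: Q2) => x k; rewrite /ok.
  by case: x => [|[|[|]]] //; rewrite !big_cons !big_nil.
have es0 : ss m.+1 0 = (ss m 0 + ss m 1 + ss m 2)%N.
  rewrite /ss Qrec'; apply: Q3 => x k; rewrite /ok.
  by case: x => [|[|[|]]] //; rewrite !big_cons !big_nil /=; lia.
have es1 : ss m.+1 1 = (ss m 0 + ss m 2 + aa m 0 + aa m 2)%N.
  rewrite /ss /aa Qrec'; apply: Q4 => x k; rewrite /ok.
  by case: x => [|[|[|]]] //; rewrite !big_cons !big_nil /=; lia.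
have es2 : ss m.+1 2 = (ss m 0 + ss m 1 + aa m 0 + aa m 1)%N.
  rewrite /ss /aa Qrec'; apply: Q4 => x k; rewrite /ok.
  by case: x => [|[|[|]]] //; rewrite !big_cons !big_nil /=; lia.
rewrite ea0 ea1 ea2 es0 es1 es2 IH1 IH2; rewrite IH1 IH2 in IH3 IH4.
move: IH3 IH4; set a0 := aa m 0; set a2 := aa m 2; set s0 := ss m 0; set s2 := ss m 2.
move=> IH3 IH4; split; try lia; rewrite !mulSn; lia.
Qed.
Definition k0 : 'I_4 := @Ordinal 4 0 isT.
Definition k1 : 'I_4 := @Ordinal 4 1 isT.
Definition k2 : 'I_4 := @Ordinal 4 2 isT.
Definition k3 : 'I_4 := @Ordinal 4 3 isT.

Definition ltile (a c : nat) : tile := (if c == 1%N then k2 else k3, (a%:Z, 0%R)).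
Definition tow (w : seq nat) : seq tile :=
  [seq ltile a (nth 0%N w a) | a <- iota 0 (size w) & nth 0%N w a != 0%N].
Definition smallT (c : cell) : tile := (if c.2 then k0 else k1, (c.1.1, c.1.2)).
Definition covered (L : seq tile) (c : cell) : bool := has (fun t => c \in tile_cells t) L.
Definition Fseq (R : seq cell) w := tow w ++ [seq smallT c | c <- R & ~~ covered (tow w) c].
Definition Ft R w : {fset tile} := [fset t in Fseq R w].
Definition letter (T : {fset tile}) (a : nat) : nat :=
  if (k2, (a%:Z, 0%R)) \in T then 1%N else if (k3, (a%:Z, 0%R)) \in T then 2%N else 0%N.
Definition word_of m T := [seq letter T a | a <- iota 0 m].

Lemma cells_small c : tile_cells (smallT c) = [:: c].
Proof. by case: c => [[x y] []]. Qed.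

Lemma small_eq (k : 'I_4) a b : (k < 2)%N ->
  exists u, tile_cells (k, (a, b)) = [:: (a, b, u)] /\ (k, (a, b)) = smallT (a, b, u).
Proof.
case: k => [[|[|]] Hk] // _.
- by exists true; split => //; congr pair; apply: val_inj.
- by exists false; split => //; congr pair; apply: val_inj.
Qed.

Lemma head_cell (t : tile) : exists2 c, c \in tile_cells t & (c.1.1, c.1.2) = t.2.
Proof.
case: t => [[[|[|[|[|k]]]] Hk] [a b]] //=.
- by exists (a, b, true); rewrite ?inE ?eqxx.
- by exists (a, b, false); rewrite ?inE ?eqxx.
- by exists (a, b, true); rewrite ?inE ?eqxx.
- by exists (a, b, false); rewrite ?inE ?eqxx.
Qed.

Lemma ltile_inj a a' c c' : ltile a c = ltile a' c' -> a = a'.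
Proof. by case. Qed.

Lemma is_tilingP R (T : {fset tile}) : reflect
  [/\ forall t, t \in T -> forall c, c \in tile_cells t -> c \in R,
      forall t1 t2, t1 \in T -> t2 \in T -> t1 != t2 ->
         forall c, c \in tile_cells t1 -> c \in tile_cells t2 -> False
    & forall c, c \in R -> exists2 t, t \in T & c \in tile_cells t]
  (is_tiling R T).
Proof.
apply: (iffP and3P) => [[/allP H1 /allP H2 /allP H3]|[H1 H2 H3]]; split.
- by move=> t /H1 /allP.
- move=> t1 t2 /H2 /allP /[apply] /orP [/eqP -> /negP //|/hasPn H] _ c C1 C2.
  by move: (H c C1); rewrite C2.
- by move=> c /H3 /hasP [t Ht Hc]; exists t.
- by apply/allP => t /H1 Ht; apply/allP.
- apply/allP => t1 T1; apply/allP => t2 T2; case: eqP => //= /eqP Hn.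
  by apply/hasPn => c C1; apply/negP => C2; exact: (H2 _ _ T1 T2 Hn c C1 C2).
- by apply/allP => c /H3 [t Ht Hc]; apply/hasP; exists t.
Qed.
Lemma share_lt a a' c c' : (0 < c <= 2)%N -> (0 < c' <= 2)%N ->
  has (fun x => x \in tile_cells (ltile a' c')) (tile_cells (ltile a c)) ->
  a = a' \/ (c = c' /\ (a' = a.+1 \/ a = a'.+1)).
Proof.
case: c => [|[|[|]]] // _; case: c' => [|[|[|]]] // _;
move=> /hasP [x]; rewrite /= ?inE => /or4P [] /eqP ->; rewrite ?inE => /or4P [] /eqP [] //; lia.
Qed.
Lemma tfE : ((true == false) = false) * ((false == true) = false). Proof. by []. Qed.
Lemma uniq_ltile a c : uniq (tile_cells (ltile a c)).
Proof.
rewrite /ltile; case: (c == 1%N) => /=; rewrite !in_cons !xpair_eqE !in_nil !eqxx !tfE /=; lia.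
Qed.
Lemma mem_tilings R T : (T \in tilings R) = (T `<=` cand_tiles R) && is_tiling R T.
Proof. by rewrite /tilings in_fset inE /= -fpowersetE. Qed.
Lemma mem_cand R t : (t \in cand_tiles R) =
  (t \in [seq (k, (c.1.1, c.1.2)) | k <- enum 'I_4, c <- R]) && all (fun c => c \in R) (tile_cells t).
Proof. by rewrite /cand_tiles in_fset inE /=. Qed.

Lemma count_sub (s R : seq cell) : uniq s -> uniq R -> {subset s <= R} ->
  count (fun c => c \in s) R = size s.
Proof.
move=> Us UR sR; rewrite -size_filter; apply/perm_size/uniq_perm.
- exact: filter_uniq.
- exact: Us.
- by move=> x; rewrite mem_filter; case Hx: (x \in s) => //=; rewrite sR.
Qed.

Lemma count_cover (R : seq cell) (L : seq tile) : uniq R -> uniq L ->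
  (forall t, t \in L -> [/\ size (tile_cells t) = 4, uniq (tile_cells t) &
                         {subset tile_cells t <= R}]) ->
  (forall t1 t2, t1 \in L -> t2 \in L -> t1 != t2 ->
     forall c, c \in tile_cells t1 -> c \in tile_cells t2 -> False) ->
  count (covered L) R = (4 * size L)%N.
Proof.
move=> UR; elim: L => [|t L IH] /=; first by rewrite muln0; elim: (R) => //= ? ? ->.
move=> /andP [tL UL] HT HD.
have -> : count (covered (t :: L)) R = count (predU (fun c => c \in tile_cells t) (covered L)) R.
  by apply: eq_count => c.
have := count_predUI (fun c => c \in tile_cells t) (covered L) R.
have -> : count (predI (fun c => c \in tile_cells t) (covered L)) R = 0%N.
  apply/eqP; rewrite -leqn0 leqNgt -has_count; apply/hasPn => c _ /=.
  apply/negP => /andP [C1 /hasP [t' t'L C2]].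
  apply: (HD t t' _ _ _ c C1 C2); first by rewrite mem_head.
    by rewrite inE t'L orbT.
  by apply: contraNneq tL => ->.
rewrite addn0 => ->.
have [S4 Ut Sub] := HT t (mem_head _ _).
rewrite count_sub // S4 IH //.
- by rewrite mulnS.
- by move=> t0 H0; apply: HT; rewrite inE H0 orbT.
- by move=> t1 t2 H1 H2; apply: HD; rewrite inE ?H1 ?H2 orbT.
Qed.

Lemma kind_small c : (nat_of_ord (smallT c).1 < 2)%N.
Proof. by case: c => [[x y] []]. Qed.

Lemma kind_ltile a c : (2 <= nat_of_ord (ltile a c).1)%N.
Proof. by rewrite /ltile; case: (c == 1%N). Qed.

Lemma smallT_inj : injective smallT.
Proof.
move=> [[x y] u] [[x' y'] u'] /= [].
by case: u; case: u' => //= _ -> ->.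
Qed.

Lemma towP w t : reflect (exists2 a, (a < size w)%N & nth 0%N w a != 0%N /\ t = ltile a (nth 0%N w a))
  (t \in tow w).
Proof.
apply: (iffP mapP) => [[a]|[a Ha [Hn ->]]].
  by rewrite mem_filter mem_iota add0n => /andP [Hn /andP [_ Ha]] ->; exists a.
by exists a => //; rewrite mem_filter mem_iota add0n Hn Ha.
Qed.

Lemma adjW w j : valid w -> (j.+1 < size w)%N -> ok (nth 0%N w j) (nth 0%N w j.+1).
Proof. by move=> /(pathP 0%N) H Hj; exact: (H j.+1 Hj). Qed.

Lemma mem_Fseq R w t : (t \in Fseq R w) =
  (t \in tow w) || (t \in [seq smallT c | c <- R & ~~ covered (tow w) c]).
Proof. by rewrite mem_cat. Qed.

Section Main.
Variables (R : seq cell) (m : nat) (lu : bool).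
Hypothesis HU : uniq R.
Hypothesis HL : forall (k : 'I_4) (a b : int), (2 <= k)%N ->
  all (fun c => c \in R) (tile_cells (k, (a, b))) =
  [&& b == 0, 0 <= a, a < m%:Z & lu || (k != 2 :> nat) || ((a + 1)%R != m%:Z)].

Definition Wl := [seq w <- W m | lu || (last 0%N w != 1%N)].

Lemma memWl w : (w \in Wl) = [&& lu || (last 0%N w != 1%N), size w == m, valid w &
   all (fun c => c <= 2)%N w].
Proof. by rewrite mem_filter memW. Qed.

Lemma ltile_in w a : w \in Wl -> (a < size w)%N -> nth 0%N w a != 0%N ->
  {subset tile_cells (ltile a (nth 0%N w a)) <= R}.
Proof.
rewrite memWl => /and4P [Hl /eqP Hs _ _] Ha Hn; apply/allP.
rewrite /ltile HL; last by case: (_ == 1%N).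
apply/and4P; split => //; first by lia.
case: (boolP lu) => //= Hlu.
case E: (nth 0%N w a == 1%N) => //=.
apply/eqP => Heq; have Ha' : a = (size w).-1 by lia.
by move: Hl; rewrite (negbTE Hlu) /= -nth_last -Ha' (eqP E).
Qed.


Lemma tow_disj w t1 t2 : w \in Wl -> t1 \in tow w -> t2 \in tow w -> t1 != t2 ->
  forall c, c \in tile_cells t1 -> c \in tile_cells t2 -> False.
Proof.
rewrite memWl => /and4P [_ /eqP Hs Hv Hall].
move=> /towP [a Ha [Hn ->]] /towP [a' Ha' [Hn' ->]] Hne c C1 C2.
have Hb : forall i, (i < size w)%N -> (0 < nth 0%N w i <= 2)%N -> True by [].
have Hb2 : forall i, (i < size w)%N -> (nth 0%N w i <= 2)%N.
  by move=> i Hi; apply: (allP Hall); apply: mem_nth.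
have Hsh : has (fun x => x \in tile_cells (ltile a' (nth 0%N w a'))) (tile_cells (ltile a (nth 0%N w a))).
  by apply/hasP; exists c.
have [Heq|[Hc [Ha1|Ha1]]] := share_lt a a' (nth 0%N w a) (nth 0%N w a')
   ltac:(by rewrite lt0n Hn Hb2) ltac:(by rewrite lt0n Hn' Hb2) Hsh.
- by move: Hne; rewrite Heq eqxx.
- subst a'; have := adjW w a Hv Ha'; rewrite /ok Hc (negbTE Hn') /=.
  by rewrite eqxx.
- subst a; have := adjW w a' Hv Ha; rewrite /ok (negbTE Hn) Hc /=.
  by rewrite eqxx.
Qed.

Lemma mem_Ft w t : (t \in Ft R w) = (t \in Fseq R w).
Proof. by rewrite /Ft in_fset. Qed.

Lemma NS w (k : 'I_4) x : (2 <= k)%N ->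
  ((k, x) \in [seq smallT c | c <- R & ~~ covered (tow w) c]) = false.
Proof. move=> Hk; apply/mapP => [[c _ E]]; have := kind_small c; rewrite -E /=; lia. Qed.

Lemma letter_Ft w a : w \in Wl -> (a < m)%N -> letter (Ft R w) a = nth 0%N w a.
Proof.
move=> Hw Ha; have := Hw; rewrite memWl => /and4P [_ /eqP Hs _ Hall].
have Hb : (nth 0%N w a <= 2)%N by apply: (allP Hall); apply: mem_nth; rewrite Hs.
have K : forall (k : 'I_4) j, (2 <= k)%N -> (j != 0%N) -> (j <= 2)%N -> ltile a j = (k, (a%:Z, 0%R)) ->
    ((k, (a%:Z, 0%R)) \in Ft R w) = (nth 0%N w a == j).
  move=> k j Hk Hj Hj2 Ej; rewrite mem_Ft mem_Fseq NS // orbF; apply/towP/idP.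
  - move=> [a' Ha' [Hn' E]]; move: E; rewrite -Ej /ltile.
    case: ifP => Hx; case: ifP => Hy [] //.
    + by move=> E'; subst a'; rewrite (eqP Hx).
    + move=> E'; subst a'; move: Hn' Hx Hy Hb Hj Hj2.
      by clear Ej; case: (nth 0%N w a) => [|[|[|]]] //; case: j => [|[|[|]]].
  - move=> /eqP E; exists a; first by rewrite Hs.
    by rewrite E Hj -Ej.
rewrite /letter (K k2 1%N) // (K k3 2%N) //.
by case: (nth 0%N w a) Hb => [|[|[|]]].
Qed.

Lemma word_Ft w : w \in Wl -> word_of m (Ft R w) = w.
Proof.
move=> Hw; have := Hw; rewrite memWl => /and4P [_ /eqP Hs _ _].
rewrite /word_of -[RHS](mkseq_nth 0%N) Hs /mkseq.
by apply/eq_in_map => a; rewrite mem_iota add0n => /andP [_ Ha]; rewrite letter_Ft.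
Qed.

Lemma Fseq_cells w t : w \in Wl -> t \in Fseq R w -> {subset tile_cells t <= R}.
Proof.
move=> Hw; rewrite mem_Fseq => /orP [/towP [a Ha [Hn ->]]|/mapP [c]].
  exact: ltile_in.
by rewrite mem_filter => /andP [_ cR] -> x; rewrite cells_small inE => /eqP ->.
Qed.

Lemma Fseq_disj w t1 t2 : w \in Wl -> t1 \in Fseq R w -> t2 \in Fseq R w -> t1 != t2 ->
  forall c, c \in tile_cells t1 -> c \in tile_cells t2 -> False.
Proof.
move=> Hw; rewrite !mem_Fseq => H1 H2.
case/orP: H1 => [T1|/mapP [c1 Hc1 ->]]; case/orP: H2 => [T2|/mapP [c2 Hc2 ->]].
- exact: (tow_disj _ _ _ Hw T1 T2).
- move: Hc2; rewrite mem_filter => /andP [Hc2 _] _ c C1; rewrite cells_small inE => /eqP E.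
  by move: Hc2; rewrite -E; move/hasP; apply; exists t1.
- move: Hc1; rewrite mem_filter => /andP [Hc1 _] _ c; rewrite cells_small inE => /eqP E C2.
  by move: Hc1; rewrite -E; move/hasP; apply; exists t2.
- move=> Hne c; rewrite !cells_small !inE => /eqP E1 /eqP E2.
  by move: Hne; rewrite -E1 -E2 eqxx.
Qed.

Lemma Ft_tiling w : w \in Wl -> Ft R w \in tilings R.
Proof.
move=> Hw; rewrite mem_tilings; apply/andP; split.
  apply/fsubsetP => t; rewrite mem_Ft => Ht.
  rewrite mem_cand; apply/andP; split; last first.
    by apply/allP; apply: Fseq_cells _ _ Hw Ht.
  have [c Hc Ec] := head_cell t.
  apply/allpairsP; exists (t.1, c) => /=; split.
  - by rewrite mem_enum.
  - exact: (Fseq_cells _ _ Hw Ht).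
  - by rewrite Ec; case: t {Ht Hc Ec}.
apply/is_tilingP; split.
- by move=> t; rewrite mem_Ft => Ht; apply: Fseq_cells _ _ Hw Ht.
- by move=> t1 t2; rewrite !mem_Ft; apply: Fseq_disj.
- move=> c Hc; case: (boolP (covered (tow w) c)) => [/hasP [t Ht Hct]|Hu].
    by exists t => //; rewrite mem_Ft mem_Fseq Ht.
  exists (smallT c); last by rewrite cells_small mem_head.
  rewrite mem_Ft mem_Fseq; apply/orP; right; apply/mapP; exists c => //.
  by rewrite mem_filter Hu Hc.
Qed.

Ltac memc := rewrite /= ?in_cons ?xpair_eqE ?in_nil ?eqxx ?tfE /=; lia.

Lemma k23 (x : int * int) : (k2, x) != (k3, x).
Proof. by apply/negP => /eqP []. Qed.

Lemma tiling_Ft T : T \in tilings R -> word_of m T \in Wl /\ T = Ft R (word_of m T).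
Proof.
rewrite mem_tilings => /andP [_ /is_tilingP [H1 H2 H3]].
set w := word_of m T.
have Hsw : size w = m by rewrite size_map size_iota.
have nthw : forall a, (a < m)%N -> nth 0%N w a = letter T a.
  by move=> a Ha; rewrite (nth_map 0%N) ?size_iota // nth_iota.
have Hlet2 : forall a, (letter T a <= 2)%N.
  by move=> a; rewrite /letter; case: ifP => //; case: ifP.
have Ti : forall a, letter T a != 0%N -> ltile a (letter T a) \in T.
  by move=> a; rewrite /letter /ltile; case: ifP => E2 //=; case: ifP.
have sh23 : forall a : nat, (k2, (a%:Z, 0%R)) \in T -> (k3, (a%:Z, 0%R)) \in T -> False.
  move=> a A B; apply: (H2 _ _ A B (k23 _) (a%:Z, 0%R, false)).
  - by rewrite /= !in_cons !eqxx !orbT.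
  - by rewrite /= !in_cons !eqxx.
have Tii : forall t, t \in T -> (2 <= t.1)%N ->
    exists2 a, (a < m)%N & letter T a != 0%N /\ t = ltile a (letter T a).
  move=> [k [x y]] Ht Hk.
  have := HL k x y Hk; rewrite (_ : all _ _ = true); last by apply/allP; exact: H1 Ht.
  move=> /esym /and4P [/eqP Ey Hx0 Hxm _]; subst y.
  exists `|x|%N; first by lia.
  have Ex : x = (`|x|%N)%:Z by lia.
  move: Ht; rewrite {1 3}Ex => Ht.
  case: k Hk Ht => [[|[|[|[|k]]]] Hk] //= _ Ht.
  - have E2 : (k2, ((`|x|%N)%:Z, 0%R)) \in T.
      by rewrite (_ : k2 = Ordinal Hk) //; apply: val_inj.
    rewrite /letter E2; split => //; rewrite /ltile /=.
    by congr pair; apply: val_inj.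
  - have E3 : (k3, ((`|x|%N)%:Z, 0%R)) \in T.
      by rewrite (_ : k3 = Ordinal Hk) //; apply: val_inj.
    case E2: ((k2, ((`|x|%N)%:Z, 0%R)) \in T); first by case: (sh23 _ E2 E3).
    rewrite /letter E2 E3; split => //; rewrite /ltile /=.
    by congr pair; apply: val_inj.
have Hw : w \in Wl.
  rewrite memWl; apply/and4P; split.
  - case: (boolP lu) => //= Hlu.
    case: m Hsw nthw HL => [|m'] Hsw nthw HL'.
      by case: (w) Hsw.
    rewrite -nth_last Hsw /= nthw //.
    apply/negP => /eqP E.
    have := Ti m'; rewrite E => /(_ isT) Hin.
    have := HL' k2 m'%:Z 0%R isT.
    rewrite (_ : all _ _ = true); last by apply/allP; have := H1 _ Hin; rewrite /ltile /=.
    rewrite (negbTE Hlu) /=; lia.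
  - by rewrite Hsw.
  - apply/(pathP 0%N) => i; rewrite Hsw; case: i => [|j] Hj.
      by rewrite /ok; case: (nth 0%N w 0).
    rewrite /= !nthw //; last by lia.
    rewrite /ok; case E: (letter T j.+1 == 0%N) => //=.
    apply/negP => /eqP Eq.
    have A := Ti j; have B := Ti j.+1; rewrite Eq E in A B.
    have {}A := A isT; have {}B := B isT.
    have Hne : ltile j (letter T j.+1) != ltile j.+1 (letter T j.+1).
      by apply/negP => /eqP /ltile_inj; lia.
    have := Hlet2 j.+1; move: E A B Hne; case: (letter T j.+1) => [|[|[|]]] //= _ A B Hne _.
    + by apply: (H2 _ _ A B Hne ((j.+1)%:Z, 0%R, true)); memc.
    + by apply: (H2 _ _ A B Hne (j%:Z, 1%R, false)); memc.
  - by apply/allP => x /mapP [a _ ->].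
split => //.
apply/fsetP => t; rewrite mem_Ft mem_Fseq; apply/idP/idP.
- move=> Ht; case: (leqP 2 t.1) => Hk.
    have [a Ha [Hn Et]] := Tii t Ht Hk.
    by apply/orP; left; apply/towP; exists a; rewrite ?Hsw // nthw.
  case: t Ht Hk => [k [x y]] Ht Hk.
  have [u [Ec Et]] := small_eq k x y Hk.
  apply/orP; right; apply/mapP; exists (x, y, u) => //.
  rewrite mem_filter; apply/andP; split; last by apply: (H1 _ Ht); rewrite Ec mem_head.
  apply/hasP => [[t' /towP [a Ha [Hn Et']] C]].
  rewrite Hsw in Ha; rewrite nthw // in Hn Et'.
  have Ht' := Ti a Hn; rewrite -Et' in Ht'.
  have Hne : (k, (x, y)) != t'.
    apply/negP => /eqP E; have := kind_ltile a (letter T a); rewrite -Et' -E /=; rewrite /= in Hk; lia.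
  apply: (H2 _ _ Ht Ht' Hne (x, y, u)); first by rewrite Ec mem_head.
  exact: C.
- case/orP => [/towP [a Ha [Hn ->]]|/mapP [c Hc ->]].
    by rewrite Hsw in Ha; rewrite nthw // in Hn *; apply: Ti.
  move: Hc; rewrite mem_filter => /andP [Hu Hc].
  have [t' Ht' C] := H3 c Hc.
  case: (leqP 2 t'.1) => Hk.
    have [a Ha [Hn Et]] := Tii t' Ht' Hk.
    case/hasP: Hu; exists t' => //; apply/towP; exists a; rewrite ?Hsw // nthw //.
  case: t' Ht' C Hk => [k [x y]] Ht' C Hk.
  have [u [Ec Et]] := small_eq k x y Hk.
  by move: C; rewrite Ec inE => /eqP ->; rewrite -Et.
Qed.

Lemma card_Ft w : w \in Wl -> (#|` Ft R w| + 3 * nl w)%N = size R.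
Proof.
move=> Hw; have := Hw; rewrite memWl => /and4P [_ /eqP Hs _ Hall].
have Utow : uniq (tow w).
  rewrite /tow map_inj_in_uniq ?filter_uniq ?iota_uniq //.
  by move=> a b _ _ /ltile_inj.
have U : uniq (Fseq R w).
  rewrite /Fseq cat_uniq; apply/and3P; split => //.
    apply/hasPn => t /mapP [c _ ->]; apply/negP => /towP [a _ [_ E]].
    by have := kind_small c; rewrite E; have := kind_ltile a (nth 0%N w a); lia.
  by rewrite map_inj_uniq ?filter_uniq //; exact: smallT_inj.
have Htow : size (tow w) = nl w.
  rewrite /tow size_map size_filter /nl -[in RHS](mkseq_nth 0%N w) /mkseq count_map.
  by apply: eq_count.
have Hcov : count (covered (tow w)) R = (4 * size (tow w))%N.
  apply: count_cover => //.
    move=> t /towP [a Ha [Hn ->]]; split.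
    - by rewrite /ltile; case: (_ == 1%N).
    - exact: uniq_ltile.
    - exact: ltile_in.
  by move=> t1 t2; apply: tow_disj.
rewrite /Ft card_fseq undup_id // size_cat Htow size_map size_filter.
have := count_predC (covered (tow w)) R.
rewrite (_ : count (predC (covered (tow w))) R = count (fun c => ~~ covered (tow w) c) R) //.
lia.
Qed.
End Main.

Lemma perm_tilings R m lu : uniq R ->
  (forall (k : 'I_4) (a b : int), (2 <= k)%N ->
    all (fun c => c \in R) (tile_cells (k, (a, b))) =
    [&& b == 0, 0 <= a, a < m%:Z & lu || (k != 2 :> nat) || ((a + 1)%R != m%:Z)]) ->
  perm_eq (tilings R) (map (Ft R) (Wl m lu)).
Proof.
move=> HU HL; apply: uniq_perm.
- exact: fset_uniq.
- rewrite map_inj_in_uniq; first by apply: filter_uniq; apply: uniqW.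
  move=> w1 w2 H1 H2 E.
  by rewrite -(word_Ft _ _ _ HU _ H1) -(word_Ft _ _ _ HU _ H2) E.
- move=> T; apply/idP/idP.
  + move=> HT; have [Hw ->] := tiling_Ft _ _ _ HU HL _ HT.
    by apply: map_f.
  + by case/mapP => w Hw ->; apply: (Ft_tiling _ _ _ HU HL _ Hw).
Qed.

Lemma count_tilings R m lu : uniq R ->
  (forall (k : 'I_4) (a b : int), (2 <= k)%N ->
    all (fun c => c \in R) (tile_cells (k, (a, b))) =
    [&& b == 0, 0 <= a, a < m%:Z & lu || (k != 2 :> nat) || ((a + 1)%R != m%:Z)]) ->
  num_tilings R = (\sum_(w <- W m | lu || (last 0%N w != 1%N)) 1)%N /\
  (total_tiles R + 3 * \sum_(w <- W m | lu || (last 0%N w != 1%N)) nl w =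
    size R * \sum_(w <- W m | lu || (last 0%N w != 1%N)) 1)%N.
Proof.
move=> HU HL; have Hp := perm_tilings _ _ _ HU HL.
split.
  by rewrite /num_tilings (perm_size Hp) size_map /Wl -sum1_size big_filter.
rewrite /total_tiles (perm_big _ Hp) /= big_map /Wl big_filter !big_distrr /= -big_split /=.
rewrite !(big_seq_cond (fun w => lu || (last 0%N w != 1%N))).
apply: eq_bigr => w /andP [Hw Hc].
have Hw' : w \in Wl m lu by rewrite mem_filter Hc Hw.
by rewrite (card_Ft _ _ _ HU HL _ Hw') muln1.
Qed.
Lemma memH (m : nat) (x y : int) (u : bool) :
  ((x, y, u) \in H_region m.+1) =
  if u then ((y == 0) && (0 <= x) && (x <= m%:Z)) || ((y == 1) && (0 <= x) && (x < m%:Z))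
  else ((y == 0) && (0 <= x) && (x < m%:Z)) || ((y == 1) && (-1 <= x) && (x < m%:Z)).
Proof.
rewrite /H_region !mem_cat [(m.+1).-1]/=.
apply/idP/idP.
- by case/or4P => /mapP [a]; rewrite mem_iota add0n => Ha [-> -> ->]; lia.
- case: u.
  + case/orP => /andP [/andP [/eqP -> H0] H1].
    * apply/or4P; constructor 1; apply/mapP; exists `|x|%N; first (rewrite mem_iota; lia).
      congr (_,_,_); lia.
    * apply/or4P; constructor 4; apply/mapP; exists `|x|%N; first (rewrite mem_iota; lia).
      congr (_,_,_); lia.
  + case/orP => /andP [/andP [/eqP -> H0] H1].
    * apply/or4P; constructor 2; apply/mapP; exists `|x|%N; first (rewrite mem_iota; lia).
      congr (_,_,_); lia.
    * apply/or4P; constructor 3; apply/mapP; exists `|(x + 1)%R|%N; first (rewrite mem_iota; lia).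
      congr (_,_,_); lia.
Qed.

Lemma memP m x y u : ((x, y, u) \in P_region m.+1) =
  ((x, y, u) \in H_region m.+1) && ~~ [&& x == m%:Z, y == 0 & u].
Proof.
rewrite /P_region mem_filter andbC [(m.+1).-1]/= !xpair_eqE.
by case: u; rewrite ?andbT ?andbF.
Qed.

Lemma HL_H m (k : 'I_4) (a b : int) : (2 <= k)%N ->
  all (fun c => c \in H_region m.+1) (tile_cells (k, (a, b))) =
  [&& b == 0, 0 <= a, a < m%:Z & true || (k != 2 :> nat) || ((a + 1)%R != m%:Z)].
Proof.
case: k => [[|[|[|[|k]]]] Hk] //= _; rewrite !memH /=; apply/idP/idP; lia.
Qed.

Lemma HL_P m (k : 'I_4) (a b : int) : (2 <= k)%N ->
  all (fun c => c \in P_region m.+1) (tile_cells (k, (a, b))) =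
  [&& b == 0, 0 <= a, a < m%:Z & false || (k != 2 :> nat) || ((a + 1)%R != m%:Z)].
Proof.
case: k => [[|[|[|[|k]]]] Hk] //= _; rewrite !memP !memH /=; apply/idP/idP; lia.
Qed.

Lemma sizeH m : size (H_region m.+1) = (4 * m + 2)%N.
Proof. rewrite /H_region !size_cat !size_map !size_iota /=; lia. Qed.

Lemma nohas (f g : nat -> cell) s s' : (forall a b, f a != g b) ->
  ~~ has (fun x => x \in map g s) (map f s').
Proof.
move=> H; apply/hasPn => x /mapP [a _ ->]; apply/mapP => [[b _ /eqP]].
by rewrite (negbTE (H a b)).
Qed.

Lemma uniqH m : uniq (H_region m.+1).
Proof.
have I1 : forall (y : int) (u : bool), injective (fun a : nat => (a%:Z, y, u)).
  by move=> y u a b [] ?; lia.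
have I2 : injective (fun a : nat => (((a%:Z - 1)%R : int), (1%R : int), false) : cell).
  by move=> a b E; have := congr1 (fun t : cell => t.1.1) E => /= ?; lia.
rewrite /H_region [(m.+1).-1]/=.
rewrite cat_uniq; apply/and3P; split.
- by rewrite map_inj_uniq ?iota_uniq.
- by apply/hasPn => x; rewrite !mem_cat => /or3P [] /mapP [b _ ->]; apply/negP => /mapP [c _ []].
rewrite cat_uniq; apply/and3P; split.
- by rewrite map_inj_uniq ?iota_uniq.
- by apply/hasPn => x; rewrite !mem_cat => /orP [] /mapP [b _ ->]; apply/negP => /mapP [c _ []].
rewrite cat_uniq; apply/and3P; split.
- by rewrite map_inj_uniq ?iota_uniq.
- by apply/hasPn => x /mapP [b _ ->]; apply/negP => /mapP [c _ []].
- by rewrite map_inj_uniq ?iota_uniq.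
Qed.

Lemma uniqP m : uniq (P_region m.+1).
Proof. exact/filter_uniq/uniqH. Qed.

Lemma sizeP m : size (P_region m.+1) = (4 * m + 1)%N.
Proof.
pose c0 : cell := ((m.+1).-1%:Z, 0%R, true).
have Hin : c0 \in H_region m.+1 by rewrite /c0 [(m.+1).-1]/= memH; lia.
have E1 : count_mem c0 (H_region m.+1) = 1%N by rewrite count_uniq_mem ?uniqH // Hin.
have := count_predC (pred1 c0) (H_region m.+1).
rewrite sizeH E1 /P_region size_filter => E.
have E2 : count (fun c => c != c0) (H_region m.+1) = count (predC (pred1 c0)) (H_region m.+1) by [].
rewrite -/c0 E2; lia.
Qed.

Local Close Scope fset_scope.

Theorem theorem6 (n : nat) : (1 <= n)%N ->
  let Hn : rat := (num_tilings (H_region n))%:R in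
  let Pn : rat := (num_tilings (P_region n))%:R in
  (total_tiles (H_region n))%:R = 5 / 2 * n%:R * Hn + 3 / 2 * Pn - 2 * Hn
  /\ (total_tiles (P_region n))%:R = 5 / 2 * n%:R * Pn - 3 / 2 * Pn
  /\ (total_tiles (P_region n))%:R = (5 * n%:R - 3) / 2 * Pn.
Proof.
case: n => [//|m] _ HH PP; rewrite {}/HH {}/PP.
have [NH EH] := count_tilings _ _ _ (uniqH m) (HL_H m).
have [NP EP] := count_tilings _ _ _ (uniqP m) (HL_P m).
rewrite sizeH in EH; rewrite sizeP in EP.
have SH1 : (\sum_(w <- W m | true || (last 0%N w != 1%N)) 1 = aa m 0 + aa m 1 + aa m 2)%N.
  transitivity (Q m (fun _ _ => 1%N)); first by [].
  by apply: Q3 => x k; case: x => [|[|[|]]].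
have SHn : (\sum_(w <- W m | true || (last 0%N w != 1%N)) nl w = ss m 0 + ss m 1 + ss m 2)%N.
  transitivity (Q m (fun _ k => k)); first by [].
  by apply: Q3 => x k; case: x => [|[|[|]]] //= _; lia.
have SP1 : (\sum_(w <- W m | false || (last 0%N w != 1%N)) 1 = aa m 0 + aa m 2)%N.
  transitivity (Q m (fun x _ => (x != 1%N) : nat)).
    by rewrite /Q big_mkcond; apply: eq_bigr => w _ /=; case: (last 0%N w != 1%N).
  by apply: Q2 => x k; case: x => [|[|[|]]].
have SPn : (\sum_(w <- W m | false || (last 0%N w != 1%N)) nl w = ss m 0 + ss m 2)%N.
  transitivity (Q m (fun x k => (x != 1%N) * k)%N).
    by rewrite /Q big_mkcond; apply: eq_bigr => w _ /=; case: (last 0%N w != 1%N) => /=; lia.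
  by apply: Q2 => x k; case: x => [|[|[|]]] //= _; lia.
rewrite SH1 SHn in NH EH; rewrite SP1 SPn in NP EP.
have [I1 I2 I3 I4] := inv m.
move: NH EH NP EP I3 I4; rewrite I1 I2.
set a0 := aa m 0; set a2 := aa m 2; set s0 := ss m 0; set s2 := ss m 2.
set tH := total_tiles _; set tP := total_tiles _.
move=> -> EH -> EP I3 I4.
have K1 : (2 * tH + 4 * (a0 + a2 + a2) = 5 * m.+1 * (a0 + a2 + a2) + 3 * (a0 + a2))%N by nia.
have K2 : (2 * tP + 3 * (a0 + a2) = 5 * m.+1 * (a0 + a2))%N by nia.
clear EH EP I3 I4; move: K1 K2; move: tH tP => h p; move: (a0 + a2)%N => P; move: (P + a2)%N => N K1 K2.
have F1 : 2 * h%:R + 4 * N%:R = 5 * (m.+1)%:R * N%:R + 3 * P%:R :> rat.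
  by rewrite -!natrM -!natrD K1.
have F2 : 2 * p%:R + 3 * P%:R = 5 * (m.+1)%:R * P%:R :> rat.
  by rewrite -!natrM -!natrD K2.
move: F1 F2; move: (h%:R : rat) (p%:R : rat) (N%:R : rat) (P%:R : rat) (m.+1%:R : rat) => h' p' N' P' M E1 E2.
split; [|split]; lra.
Qed.
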